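(* Let $\lambda_{\max}\ge 1$ and let $F:[0,\lambda_{\max}]\to\mathbb{R}_+$ be continuously differentiable with $F(0)=0$. Let $$F^\star=\sup\Big\{\mathbb{E}_\alpha[F(X)] : \alpha \text{ a probability measure on }[0,\lambda_{\max}],\ X\sim\alpha,\ \mathbb{E}_\alpha[X]\le 1\Big\}.$$ Then for every stable control policy $\lambda:\mathbb{Z}_+\to[0,\lambda_{\max}]$, with stationary queue length $\bar q\sim\pi$, we have $\mathbb{E}_\pi[F(\lambda(\bar q))]\le F^\star$.
   Context: A control policy is a function $\lambda:\mathbb{Z}_+\to[0,\lambda_{\max}]$. It defines a continuous-time birth–death Markov chain (the queue length of a single-server queue with service rate $1$) on $\mathbb{Z}_+$ with transition rate $\lambda(q)$ from $q$ to $q+1$ and rate $1$ from $q$ to $q-1$ for $q\ge 1$. Let $\mathcal S$ be the set of states reachable from $0$ (i.e. $\mathcal S=\{0,1,\dots,q_0\}$ with $q_0$ the first $q\ge 1$ with $\lambda(q)=0$, or $\mathcal S=\mathbb{Z}_+$ if there is none). The policy is called stable if $\sum_{i\in\mathcal S}\prod_{q=0}^{i}\lambda(q)<\infty$, i.e. the chain restricted to $\mathcal S$ is positive recurrent; then $\pi$ denotes its unique stationary distribution on $\mathcal S$ and $\bar q$ a random variable with law $\pi$. *)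

(* Defs.v *)
From HB Require Import structures.
From mathcomp Require Import all_boot all_order all_algebra.
From mathcomp Require Import all_classical all_reals all_analysis.
Set Implicit Arguments. Unset Strict Implicit. Unset Printing Implicit Defensive.
Import Order.TTheory GRing.Theory Num.Theory numFieldNormedType.Exports.
Local Open Scope classical_set_scope.
Local Open Scope ring_scope.

(* Reachable set S from state 0: i \in S iff lambda q <> 0 for all 1 <= q < i,
   i.e. S = {0,...,q0} with q0 the first q >= 1 with lambda q = 0, or all of N. *)
Definition inS {R : realType} (lam : nat -> R) (i : nat) : Prop :=
  forall q : nat, (1 <= q)%N -> (q < i)%N -> lam q <> 0.

Definition stable {R : realType} (lam : nat -> R) : Prop :=
  (\sum_(i <oo | `[< inS lam i >]) ((\prod_(q < i.+1) lam q)%:E) < +oo)%E.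

(* pi is a stationary distribution on S of the birth-death chain with birth
   rate lam q (q -> q+1) and death rate 1 (q -> q-1, q >= 1):
   a probability distribution supported on S satisfying the global balance
   equations pi Q = 0. *)
Definition stationary_dist {R : realType} (lam : nat -> R) (pi : nat -> R) : Prop :=
  [/\ (forall i, 0 <= pi i),
      (forall i, ~ inS lam i -> pi i = 0),
      ((\sum_(i <oo) ((pi i)%:E))%E = 1%E) &
      (forall j : nat,
          pi j * (lam j + (if j is 0 then 0 else 1)) =
          (if j is k.+1 then pi k * lam k else 0) + pi j.+1)].

Definition I0 {R : realType} (lmax : R) : set R := [set x : R | 0 <= x <= lmax].

Definition Fstar {R : realType} (F : R -> R) (lmax : R) : \bar R :=
  ereal_sup [set (\int[P]_(x in I0 lmax) (F x)%:E)%E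
            | P in [set P : probability R R |
                     P (I0 lmax) = 1%E /\
                     (\int[P]_(x in I0 lmax) x%:E <= 1)%E]].

(* Main.v *)
Require Import Defs.
From HB Require Import structures.
From mathcomp Require Import all_boot all_order all_algebra.
From mathcomp Require Import all_classical all_reals all_analysis.
From mathcomp Require Import measurable_realfun.
Import Order.TTheory GRing.Theory Num.Theory numFieldNormedType.Exports.
Local Open Scope classical_set_scope.
Local Open Scope ring_scope.

Section discrete.
Context {R : realType} (pi lam : nat -> R) (pi0 : forall i, (0 <= pi i)%R)
  (pi1 : (\sum_(i <oo) (pi i)%:E = 1)%E).

Definition dmu (i : nat) : {measure set R -> \bar R} :=
  mscale (NngNum (pi0 i)) (\d_(lam i)).
Definition dP := let _ := pi1 in mseries dmu 0.
HB.instance Definition _ := Measure.on dP.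

Lemma dPE A : dP A = (\sum_(i <oo) (pi i)%:E * \d_(lam i) A)%E.
Proof. by []. Qed.

Lemma dP_setT : dP setT = 1%E.
Proof.
rewrite dPE -pi1; apply: eq_eseriesr => i _.
by rewrite diracE in_setT mule1.
Qed.

HB.instance Definition _ := Measure_isProbability.Build _ _ _ dP dP_setT.

Local Open Scope ereal_scope.
Lemma dP_int (D : set R) (f : R -> \bar R) : measurable D ->
  (forall x, D x -> 0 <= f x) -> measurable_fun D f ->
  \int[dP]_(x in D) f x = \sum_(i <oo) (pi i)%:E * (\d_(lam i) D * f (lam i)).
Proof.
move=> mD f0 mf.
rewrite /dP ge0_integral_measure_series//; apply: eq_eseriesr => i _.
by rewrite /dmu ge0_integral_mscale// integral_dirac.
Qed.
End discrete.

Lemma I0E {R : realType} (lmax : R) : I0 lmax = `[0%R, lmax]%classic.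
Proof. by apply/funext => x; rewrite /I0 /= in_itv. Qed.

Theorem proposition4p1 (R : realType) (lmax : R) (F : R -> R)
  (lam : nat -> R) (pi : nat -> R) :
  1 <= lmax ->
  (forall x : R, derivable F x 1) -> continuous (F^`())%classic ->
  (forall x : R, 0 <= x <= lmax -> 0 <= F x) ->
  F 0 = 0 ->
  (forall q : nat, 0 <= lam q <= lmax) ->
  stable lam ->
  stationary_dist lam pi ->
  (\sum_(i <oo) ((pi i * F (lam i))%:E) <= Fstar F lmax)%E.
Proof.
move=> _ dF _ F0 _ lamI _ [pi0 _ pi1 bal].
have flow : forall j, pi j * lam j = pi j.+1.
  elim=> [|j IH]; first by have := bal 0%N; rewrite /= addr0 add0r.
  have := bal j.+1; rewrite /= IH mulrDr mulr1 => h.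
  by apply: (addIr (pi j.+1)); rewrite h addrC.
have mI : measurable (I0 lmax) by rewrite I0E; exact: measurable_itv.
have cF : continuous F.
  have := @derivable_within_continuous _ _ F `]-oo, +oo[%R.
  rewrite set_itvE => h; apply/continuous_subspace_setT/h => x _; exact: dF.
have mF : measurable_fun (I0 lmax) (EFin \o F).
  apply/measurable_EFinP; apply: measurable_funTS.
  exact: continuous_measurable_fun.
have dI : forall i, \d_(lam i) (I0 lmax) = 1%E :> \bar R.
  by move=> i; rewrite diracE mem_set; [by [] | exact: lamI].
apply: ereal_sup_ubound; exists (dP pi lam pi0 pi1).
  split.
    rewrite /= dPE -pi1; apply: eq_eseriesr => i _.
    by rewrite dI mule1.
  rewrite dP_int //.
  - under eq_eseriesr do rewrite dI mul1e -EFinM flow -addn1.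
    rewrite (@nneseries_addn _ (fun i => (pi i)%:E) 1); last by move=> i; rewrite lee_fin.
    rewrite -pi1 (@nneseries_split _ _ 0 1); last by move=> i _; rewrite lee_fin.
    rewrite add0n; apply: leeDr.
    by rewrite big_nat1 lee_fin.
  - by move=> x /andP [] *; rewrite lee_fin.
  - rewrite dP_int //.
      apply: eq_eseriesr => i _.
      by rewrite dI mul1e /= -EFinM.
Qed.
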